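(* Suppose there is a function $f:\mathbb{N}\times\mathbb{N}\times\mathbb{R}_{>0}\to\mathbb{R}_{\ge0}$ such that, for all $n,T\in\mathbb{N}$, $\varepsilon>0$ and every IIK instance with $n$ items and $T$ times, one can compute in time $f(n,T,\varepsilon)$ a feasible solution whose profit is at least $(1-\varepsilon)$ times the maximum profit of a 1-in feasible solution. Then for every IIK instance with $n$ items and $T$ times one can compute a feasible solution of profit at least $(1-\varepsilon)$ times the optimum in time $O(n)\cdot f(n,T,\varepsilon)$.
   Context: An IIK instance consists of items $[n]$ with profits $p_i>0$ and weights $w_i>0$, a number $T$ of times and capacities $0<b_1\le\dots\le b_T$. A feasible solution is $x=(x_1,\dots,x_T)$ with $x_t\in\{0,1\}^n$, $w^Tx_t\le b_t$ for $t\in[T]$ and $x_t\le x_{t+1}$ componentwise for $t\in[T-1]$; its profit is $\sum_{t\in[T]}p^Tx_t$. A feasible solution is called 1-in if $x_{T,i}=1$ for some item $i$ of maximum profit, i.e. with $p_i=\max_{j\in[n]}p_j$ (so an item of highest profit is inserted at some time). *)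

(* Defs.v *)
From Stdlib Require Import Reals List.
Import ListNotations.
Open Scope R_scope.

(** * IIK instances (0-indexed: items 0..n-1, times 0..T-1) *)
Record instance := Inst {
  n_items : nat;
  n_times : nat;
  prof : nat -> R;
  wgt  : nat -> R;
  cap  : nat -> R    (* b_t, relevant for t < T (b_{t+1} in 1-indexed notation) *)
}.

Definition valid (I : instance) : Prop :=
  (forall i, (i < n_items I)%nat -> 0 < prof I i) /\
  (forall i, (i < n_items I)%nat -> 0 < wgt I i) /\
  (forall t, (t < n_times I)%nat -> 0 < cap I t) /\
  (forall t, (S t < n_times I)%nat -> cap I t <= cap I (S t)).

(** A solution: [x t i = true] iff item i is in the knapsack at time t. *)
Definition solution := nat -> nat -> bool.

Definition sumR (n : nat) (g : nat -> R) : R :=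
  fold_right Rplus 0 (map g (seq 0 n)).

Definition b2R (b : bool) : R := if b then 1 else 0.

Definition feasible (I : instance) (x : solution) : Prop :=
  (forall t, (t < n_times I)%nat ->
     sumR (n_items I) (fun i => wgt I i * b2R (x t i)) <= cap I t) /\
  (forall t i, (S t < n_times I)%nat -> (i < n_items I)%nat ->
     x t i = true -> x (S t) i = true).

Definition profit (I : instance) (x : solution) : R :=
  sumR (n_times I) (fun t => sumR (n_items I) (fun i => prof I i * b2R (x t i))).

Definition one_in (I : instance) (x : solution) : Prop :=
  (0 < n_times I)%nat /\
  exists i, (i < n_items I)%nat /\ x (pred (n_times I)) i = true /\
    (forall j, (j < n_items I)%nat -> prof I j <= prof I i).

(** * Model of computation: a real-RAM register machine.
    Real values live in registers (indexed by nat) and are never exposed to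
    the program; the control flow may only branch on comparisons.  Every
    instruction costs 1; halting with an output costs n*T (writing the
    n*T output bits).  An algorithm may depend (for free) on n and T. *)
Inductive aop := AAdd | ASub | AMul | ADiv.

Definition aop_sem (o : aop) (a b : R) : R :=
  match o with AAdd => a + b | ASub => a - b | AMul => a * b | ADiv => a / b end.

Inductive prog :=
| Halt    (x : solution)
| LoadP   (i r : nat) (k : prog)
| LoadW   (i r : nat) (k : prog)
| LoadB   (t r : nat) (k : prog)
| LoadEps (r : nat) (k : prog)
| LoadNat (q r : nat) (k : prog)
| Arith   (o : aop) (d a b : nat) (k : prog)
| Test    (a b : nat) (k : bool -> prog).

Definition algo := nat -> nat -> prog.

Definition upd (m : nat -> R) (r : nat) (v : R) : nat -> R :=
  fun j => if Nat.eqb j r then v else m j.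

Fixpoint run (I : instance) (eps : R) (P : prog) (m : nat -> R)
  : solution * nat :=
  match P with
  | Halt x => (x, (n_items I * n_times I)%nat)
  | LoadP i r k => let '(x, c) := run I eps k (upd m r (prof I i)) in (x, S c)
  | LoadW i r k => let '(x, c) := run I eps k (upd m r (wgt I i)) in (x, S c)
  | LoadB t r k => let '(x, c) := run I eps k (upd m r (cap I t)) in (x, S c)
  | LoadEps r k => let '(x, c) := run I eps k (upd m r eps) in (x, S c)
  | LoadNat q r k => let '(x, c) := run I eps k (upd m r (INR q)) in (x, S c)
  | Arith o d a b k =>
      let '(x, c) := run I eps k (upd m d (aop_sem o (m a) (m b))) in (x, S c)
  | Test a b k =>
      let '(x, c) := run I eps (k (if Rle_dec (m a) (m b) then true else false)) m
      in (x, S c)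
  end.

Definition exec (A : algo) (I : instance) (eps : R) : solution * nat :=
  run I eps (A (n_items I) (n_times I)) (fun _ => 0).

(* Main.v *)
Require Import Defs.
From Stdlib Require Import Reals Lra Lia List Classical.
Import ListNotations.
Open Scope R_scope.

Lemma upd_other m r v j : j <> r -> upd m r v j = m j.
Proof. intro H. unfold upd. destruct (Nat.eqb j r) eqn:E; auto.
  apply Nat.eqb_eq in E. contradiction. Qed.
Lemma upd_same m r v : upd m r v r = v.
Proof. unfold upd. now rewrite Nat.eqb_refl. Qed.

Definition modI (I : instance) (k : nat) : instance :=
  Inst (n_items I) (n_times I)
    (fun j => if Rle_dec (prof I j) (prof I k) then prof I j else prof I k / INR 2)
    (fun j => if Rle_dec (prof I j) (prof I k) then wgt I j
              else cap I (pred (n_times I)) + wgt I j)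
    (cap I).

Fixpoint sim (sh : nat -> nat) (k T : nat) (P : prog) (K : solution -> prog) : prog :=
  match P with
  | Halt x => K x
  | LoadP i r P' => LoadP i 1 (LoadP k 3 (Test 1 3 (fun b => if b
        then LoadP i (sh r) (sim sh k T P' K)
        else LoadNat 2 5 (Arith ADiv (sh r) 3 5 (sim sh k T P' K)))))
  | LoadW i r P' => LoadP i 1 (LoadP k 3 (Test 1 3 (fun b => if b
        then LoadW i (sh r) (sim sh k T P' K)
        else LoadB (pred T) 5 (LoadW i 7 (Arith AAdd (sh r) 5 7 (sim sh k T P' K))))))
  | LoadB t r P' => LoadB t (sh r) (sim sh k T P' K)
  | LoadEps r P' => LoadEps (sh r) (sim sh k T P' K)
  | LoadNat q r P' => LoadNat q (sh r) (sim sh k T P' K)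
  | Arith o d a b P' => Arith o (sh d) (sh a) (sh b) (sim sh k T P' K)
  | Test a b kk => Test (sh a) (sh b) (fun bb => sim sh k T (kk bb) K)
  end.

Definition frame (sh : nat -> nat) (m m' : nat -> R) :=
  forall j, (forall r, j <> sh r) -> j <> 1%nat -> j <> 3%nat -> j <> 5%nat -> j <> 7%nat ->
   m' j = m j.

Lemma corr_upd (sh : nat -> nat) (m mA : nat -> R) : (forall r r', sh r = sh r' -> r = r') ->
  (forall r, m (sh r) = mA r) -> forall r v r', upd m (sh r) v (sh r') = upd mA r v r'.
Proof. intros Hi Hc r v r'. unfold upd. destruct (Nat.eqb r' r) eqn:E.
  - apply Nat.eqb_eq in E; subst. now rewrite Nat.eqb_refl.
  - destruct (Nat.eqb (sh r') (sh r)) eqn:E2; auto.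
    apply Nat.eqb_eq in E2. apply Hi in E2. subst. now rewrite Nat.eqb_refl in E.
Qed.

Lemma corr_scr (sh : nat -> nat) (m mA : nat -> R) j v : (forall r, m (sh r) = mA r) -> (forall r, sh r <> j) ->
  forall r', upd m j v (sh r') = mA r'.
Proof. intros Hc Hj r'. rewrite upd_other; auto. Qed.

Lemma pairS (p : solution * nat) : (let '(x, c) := p in (x, S c)) = (fst p, S (snd p)).
Proof. now destruct p. Qed.


Section RL.
Variables (I : instance) (e : R) (m : nat -> R).
Lemma rLP i r k : run I e (LoadP i r k) m = (fst (run I e k (upd m r (prof I i))), S (snd (run I e k (upd m r (prof I i))))).
Proof. simpl. now destruct (run _ _ _ _). Qed.
Lemma rLW i r k : run I e (LoadW i r k) m = (fst (run I e k (upd m r (wgt I i))), S (snd (run I e k (upd m r (wgt I i))))).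
Proof. simpl. now destruct (run _ _ _ _). Qed.
Lemma rLB i r k : run I e (LoadB i r k) m = (fst (run I e k (upd m r (cap I i))), S (snd (run I e k (upd m r (cap I i))))).
Proof. simpl. now destruct (run _ _ _ _). Qed.
Lemma rLE r k : run I e (LoadEps r k) m = (fst (run I e k (upd m r e)), S (snd (run I e k (upd m r e)))).
Proof. simpl. now destruct (run _ _ _ _). Qed.
Lemma rLN q r k : run I e (LoadNat q r k) m = (fst (run I e k (upd m r (INR q))), S (snd (run I e k (upd m r (INR q))))).
Proof. simpl. now destruct (run _ _ _ _). Qed.
Lemma rAr o d a b k : run I e (Arith o d a b k) m =
  (fst (run I e k (upd m d (aop_sem o (m a) (m b)))), S (snd (run I e k (upd m d (aop_sem o (m a) (m b)))))).
Proof. simpl. now destruct (run _ _ _ _). Qed.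
Lemma rT a b k : run I e (Test a b k) m =
  (fst (run I e (k (if Rle_dec (m a) (m b) then true else false)) m),
   S (snd (run I e (k (if Rle_dec (m a) (m b) then true else false)) m))).
Proof. simpl. now destruct (run _ _ _ _). Qed.
Lemma rH x : run I e (Halt x) m = (x, (n_items I * n_times I)%nat).
Proof. reflexivity. Qed.
End RL.

Lemma sim_ok I eps k sh P K :
  (forall r r', sh r = sh r' -> r = r') ->
  (forall r, sh r <> 1%nat /\ sh r <> 3%nat /\ sh r <> 5%nat /\ sh r <> 7%nat) ->
  forall m mA, (forall r, m (sh r) = mA r) ->
  exists m' c', frame sh m m' /\
   run I eps (sim sh k (n_times I) P K) m =
     (fst (run I eps (K (fst (run (modI I k) eps P mA))) m'),
      (c' + snd (run I eps (K (fst (run (modI I k) eps P mA))) m'))%nat) /\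
   (c' + n_items I * n_times I <= 6 * snd (run (modI I k) eps P mA))%nat.
Proof.
  intros Hi Hs. induction P; intros m mA Hc.
  - exists m, 0%nat. split; [intros j; auto|]. simpl. split.
    + now destruct (run I eps (K x) m).
    + lia.
  - cbn [sim]. rewrite !rLP, rT.
    replace (upd (upd m 1 (prof I i)) 3 (prof I k) 1) with (prof I i) by reflexivity.
    replace (upd (upd m 1 (prof I i)) 3 (prof I k) 3) with (prof I k) by reflexivity.
    cbn [prof modI].
    destruct (Rle_dec (prof I i) (prof I k)) as [Hl2|Hl2].
    + destruct (IHP (upd (upd (upd m 1 (prof I i)) 3 (prof I k)) (sh r) (prof I i))
                    (upd mA r (prof I i))) as (m' & c' & Hf & He & Hcost).
      { apply corr_upd; auto. intro r'. rewrite !upd_other; auto; apply Hs. }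
      exists m', (4 + c')%nat. rewrite rLP, He. split.
      { intros j H1 H2 H3 H4 H5. rewrite Hf; auto. rewrite !upd_other; auto. }
      simpl. split; [f_equal|]; lia.
    + destruct (IHP (upd (upd (upd (upd m 1 (prof I i)) 3 (prof I k)) 5 (INR 2)) (sh r)
                      (prof I k / INR 2))
                    (upd mA r (prof I k / INR 2))) as (m' & c' & Hf & He & Hcost).
      { apply corr_upd; auto. intro r'. rewrite !upd_other; auto; apply Hs. }
      exists m', (5 + c')%nat. rewrite rLN, rAr.
      replace (upd (upd (upd m 1 (prof I i)) 3 (prof I k)) 5 (INR 2) 3) with (prof I k) by reflexivity.
      replace (upd (upd (upd m 1 (prof I i)) 3 (prof I k)) 5 (INR 2) 5) with (INR 2) by reflexivity.
      unfold aop_sem. rewrite He. split.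
      { intros j H1 H2 H3 H4 H5. rewrite Hf; auto. rewrite !upd_other; auto. }
      cbn [fst snd]. split; [f_equal|]; lia.
  - cbn [sim]. rewrite !rLP, rT.
    replace (upd (upd m 1 (prof I i)) 3 (prof I k) 1) with (prof I i) by reflexivity.
    replace (upd (upd m 1 (prof I i)) 3 (prof I k) 3) with (prof I k) by reflexivity.
    rewrite rLW. cbn [wgt modI].
    destruct (Rle_dec (prof I i) (prof I k)) as [Hl2|Hl2].
    + destruct (IHP (upd (upd (upd m 1 (prof I i)) 3 (prof I k)) (sh r) (wgt I i))
                    (upd mA r (wgt I i))) as (m' & c' & Hf & He & Hcost).
      { apply corr_upd; auto. intro r'. rewrite !upd_other; auto; apply Hs. }
      exists m', (4 + c')%nat. rewrite rLW, He. split.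
      { intros j H1 H2 H3 H4 H5. rewrite Hf; auto. rewrite !upd_other; auto. }
      cbn [fst snd]. split; [f_equal|]; lia.
    + set (m0 := upd (upd (upd (upd m 1 (prof I i)) 3 (prof I k)) 5 (cap I (pred (n_times I)))) 7 (wgt I i)).
      destruct (IHP (upd m0 (sh r) (cap I (pred (n_times I)) + wgt I i))
                    (upd mA r (cap I (pred (n_times I)) + wgt I i))) as (m' & c' & Hf & He & Hcost).
      { apply corr_upd; auto. intro r'. unfold m0. rewrite !upd_other; auto; apply Hs. }
      exists m', (6 + c')%nat. rewrite rLB, rLW, rAr.
      fold m0.
      replace (m0 5%nat) with (cap I (pred (n_times I))) by reflexivity.
      replace (m0 7%nat) with (wgt I i) by reflexivity.
      unfold aop_sem. rewrite He. split.
      { intros j H1 H2 H3 H4 H5. rewrite Hf; auto. unfold m0. rewrite !upd_other; auto. }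
      cbn [fst snd]. split; [f_equal|]; lia.
  - cbn [sim]. rewrite !rLB. cbn [cap modI].
    destruct (IHP (upd m (sh r) (cap I t)) (upd mA r (cap I t))) as (m' & c' & Hf & He & Hcost).
    { apply corr_upd; auto. }
    exists m', (S c'). rewrite He. split.
    { intros j H1 H2 H3 H4 H5. rewrite Hf; auto. rewrite !upd_other; auto. }
    cbn [fst snd]. split; [f_equal|]; lia.
  - cbn [sim]. rewrite !rLE.
    destruct (IHP (upd m (sh r) eps) (upd mA r eps)) as (m' & c' & Hf & He & Hcost).
    { apply corr_upd; auto. }
    exists m', (S c'). rewrite He. split.
    { intros j H1 H2 H3 H4 H5. rewrite Hf; auto. rewrite !upd_other; auto. }
    cbn [fst snd]. split; [f_equal|]; lia.
  - cbn [sim]. rewrite !rLN.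
    destruct (IHP (upd m (sh r) (INR q)) (upd mA r (INR q))) as (m' & c' & Hf & He & Hcost).
    { apply corr_upd; auto. }
    exists m', (S c'). rewrite He. split.
    { intros j H1 H2 H3 H4 H5. rewrite Hf; auto. rewrite !upd_other; auto. }
    cbn [fst snd]. split; [f_equal|]; lia.
  - cbn [sim]. rewrite !rAr. rewrite !Hc.
    destruct (IHP (upd m (sh d) (aop_sem o (mA a) (mA b))) (upd mA d (aop_sem o (mA a) (mA b))))
      as (m' & c' & Hf & He & Hcost).
    { apply corr_upd; auto. }
    exists m', (S c'). rewrite He. split.
    { intros j H1 H2 H3 H4 H5. rewrite Hf; auto. rewrite !upd_other; auto. }
    cbn [fst snd]. split; [f_equal|]; lia.
  - cbn [sim]. rewrite !rT. rewrite !Hc.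
    destruct (H (if Rle_dec (mA a) (mA b) then true else false) m mA Hc)
      as (m' & c' & Hf & He & Hcost).
    exists m', (S c'). rewrite He. split. auto.
    cbn [fst snd]. split; [f_equal|]; lia.
Qed.


Lemma fr_le (l : list nat) (g h : nat -> R) : (forall i, In i l -> g i <= h i) ->
  fold_right Rplus 0 (map g l) <= fold_right Rplus 0 (map h l).
Proof. induction l; simpl; intros H. lra. pose proof (H a (or_introl eq_refl)).
  assert (fold_right Rplus 0 (map g l) <= fold_right Rplus 0 (map h l)) by (apply IHl; auto). lra. Qed.

Lemma sumR_le n g h : (forall i, (i < n)%nat -> g i <= h i) -> sumR n g <= sumR n h.
Proof. intro H. apply fr_le. intros i Hi. apply in_seq in Hi. apply H. lia. Qed.

Lemma sumR_ext n g h : (forall i, (i < n)%nat -> g i = h i) -> sumR n g = sumR n h.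
Proof. intro H. apply Rle_antisym; apply sumR_le; intros i Hi; rewrite H; auto; lra. Qed.

Lemma sumR_zero n g : (forall i, (i < n)%nat -> g i = 0) -> sumR n g = 0.
Proof. intro H. transitivity (sumR n (fun _ => 0)). apply sumR_ext; auto.
  unfold sumR. generalize (seq 0 n). induction l; simpl; auto. rewrite IHl; lra. Qed.

Lemma sumR_nonneg n g : (forall i, (i < n)%nat -> 0 <= g i) -> 0 <= sumR n g.
Proof. intro H. rewrite <- (sumR_zero n (fun _ => 0)) by auto. apply sumR_le. auto. Qed.

Lemma b2R_01 b : 0 <= b2R b <= 1.
Proof. destruct b; simpl; lra. Qed.

Lemma run_ge I eps P m : (n_items I * n_times I <= snd (run I eps P m))%nat.
Proof. revert m. induction P; intro m;
  rewrite ?rLP, ?rLW, ?rLB, ?rLE, ?rLN, ?rAr, ?rT, ?rH; cbn [snd]; auto.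
  all: try (specialize (IHP (upd m r (prof I i))); lia).
  all: try (specialize (IHP (upd m r (wgt I i))); lia).
  all: try (specialize (IHP (upd m r (cap I t))); lia).
  all: try (specialize (IHP (upd m r eps)); lia).
  all: try (specialize (IHP (upd m r (INR q))); lia).
  all: try (specialize (IHP (upd m d (aop_sem o (m a) (m b)))); lia).
  all: try (specialize (H (if Rle_dec (m a) (m b) then true else false) m); lia).
Qed.

Lemma cap_mono I t : valid I -> (t < n_times I)%nat -> cap I t <= cap I (pred (n_times I)).
Proof. intros (_&_&_&Hm) Ht.
  assert (forall d, (t + d < n_times I)%nat -> cap I t <= cap I (t + d)).
  { induction d; intro H. rewrite Nat.add_0_r; lra.
    replace (t + S d)%nat with (S (t + d)) by lia. eapply Rle_trans. apply IHd; lia. apply Hm. lia. }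
  replace (pred (n_times I)) with (t + (pred (n_times I) - t))%nat by lia. apply H. lia. Qed.

Lemma use_mono I y t i : feasible I y -> (t < n_times I)%nat -> (i < n_items I)%nat ->
  y t i = true -> y (pred (n_times I)) i = true.
Proof. intros (_&Hm) Ht Hi.
  assert (forall d, (t + d < n_times I)%nat -> y t i = true -> y (t + d)%nat i = true).
  { induction d; intros H H'. rewrite Nat.add_0_r; auto.
    replace (t + S d)%nat with (S (t + d)) by lia. apply Hm; [lia|auto|apply IHd; auto; lia]. }
  replace (pred (n_times I)) with (t + (pred (n_times I) - t))%nat by lia. apply H. lia. Qed.

Lemma half_le a : 0 < a -> a / INR 2 <= a.
Proof. intro H. replace (INR 2) with 2 by (simpl; ring). lra. Qed.

Lemma valid_modI I k : valid I -> (0 < n_times I)%nat -> (k < n_items I)%nat -> valid (modI I k).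
Proof. intros V HT Hk. pose proof V as (Hp&Hw&Hc&Hm).
  assert (0 < cap I (pred (n_times I))) by (apply Hc; lia).
  split; [|split; [|split]]; cbn [n_items n_times prof wgt cap modI]; intros.
  - destruct (Rle_dec (prof I i) (prof I k)). auto. pose proof (Hp k Hk).
    apply Rdiv_lt_0_compat; auto. simpl; lra.
  - destruct (Rle_dec (prof I i) (prof I k)). auto. pose proof (Hw i H0). lra.
  - auto.
  - auto. Qed.

Lemma feas_modI I k x : valid I -> (0 < n_times I)%nat -> feasible (modI I k) x -> feasible I x.
Proof. intros V HT (Hs&Hm). pose proof V as (Hp&Hw&Hc&_). split; auto.
  intros t Ht. eapply Rle_trans; [|apply (Hs t Ht)]. apply sumR_le. intros i Hi.
  cbn [wgt modI]. destruct (Rle_dec (prof I i) (prof I k)). lra.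
  assert (0 < cap I (pred (n_times I))) by (apply Hc; lia).
  pose proof (b2R_01 (x t i)). nra. Qed.

Lemma profit_modI_le I k x : valid I -> (k < n_items I)%nat -> profit (modI I k) x <= profit I x.
Proof. intros V Hk. pose proof V as (Hp&_). apply sumR_le; intros t Ht. apply sumR_le; intros i Hi.
  cbn [prof modI]. pose proof (b2R_01 (x t i)).
  destruct (Rle_dec (prof I i) (prof I k)). lra.
  apply Rmult_le_compat_r. lra. pose proof (Hp k Hk). pose proof (half_le _ H0). lra. Qed.

Lemma opt_modI I k y : valid I -> (0 < n_times I)%nat -> (k < n_items I)%nat -> feasible I y ->
  y (pred (n_times I)) k = true ->
  (forall j, (j < n_items I)%nat -> y (pred (n_times I)) j = true -> prof I j <= prof I k) ->
  feasible (modI I k) y /\ one_in (modI I k) y /\ profit (modI I k) y = profit I y.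
Proof. intros V HT Hk Fy Hyk Hmax. pose proof V as (Hp&_).
  assert (Hu : forall t i, (t < n_times I)%nat -> (i < n_items I)%nat -> y t i = true ->
     prof I i <= prof I k) by (intros; apply Hmax; auto; eapply use_mono; eauto).
  split; [|split].
  - destruct Fy as (Hs&Hm). split; auto. intros t Ht. cbn [n_items n_times cap modI] in *.
    rewrite <- (Hs t Ht) . apply Req_le. apply sumR_ext. intros i Hi. cbn [wgt modI].
    destruct (y t i) eqn:E. destruct (Rle_dec (prof I i) (prof I k)); auto.
    exfalso; apply n; eapply Hu; eauto. simpl; ring.
  - split; auto. exists k. cbn [n_items n_times modI]. split; [|split]; auto.
    intros j Hj. cbn [prof modI]. destruct (Rle_dec (prof I k) (prof I k)); [|lra].
    pose proof (Hp k Hk). destruct (Rle_dec (prof I j) (prof I k)); auto. apply half_le; auto.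
  - apply sumR_ext; intros t Ht. apply sumR_ext; intros i Hi. cbn [prof modI].
    destruct (y t i) eqn:E. destruct (Rle_dec (prof I i) (prof I k)); auto.
    exfalso; apply n; eapply Hu; eauto. simpl; ring. Qed.

Lemma max_exists n (P : nat -> bool) (p : nat -> R) : (exists i, (i < n)%nat /\ P i = true) ->
  exists k, (k < n)%nat /\ P k = true /\ forall j, (j < n)%nat -> P j = true -> p j <= p k.
Proof. induction n; intros (i&Hi&HP). lia.
  destruct (classic (exists i, (i < n)%nat /\ P i = true)) as [Hex|Hno].
  - destruct (IHn Hex) as (k&Hk&HPk&Hm).
    destruct (P n) eqn:Pn.
    + destruct (Rle_dec (p n) (p k)).
      * exists k. split; [lia|split; auto]. intros j Hj HPj. destruct (Nat.eq_dec j n); subst; auto. apply Hm; auto; lia.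
      * exists n. split; [lia|split; auto]. intros j Hj HPj. destruct (Nat.eq_dec j n); subst; [lra|].
        specialize (Hm j ltac:(lia) HPj). lra.
    + exists k. split; [lia|split; auto]. intros j Hj HPj. destruct (Nat.eq_dec j n); subst. congruence. apply Hm; auto; lia.
  - exists n. assert (i = n). { destruct (Nat.eq_dec i n); auto. exfalso. apply Hno. exists i. split; auto; lia. }
    subst. split; [lia|split; auto]. intros j Hj HPj. destruct (Nat.eq_dec j n); subst. lra.
    exfalso. apply Hno. exists j. split; auto; lia. Qed.

Fixpoint accp (l : list (nat * nat)) (x : solution) (K : prog) : prog :=
  match l with
  | [] => K
  | (t, i) :: l' => LoadP i 13 (LoadNat (if x t i then 1 else 0) 15
        (Arith AMul 13 13 15 (Arith AAdd 11 13 11 (accp l' x K))))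
  end.

Definition hI (I : instance) (x : solution) (p : nat * nat) : R :=
  prof I (snd p) * b2R (x (fst p) (snd p)).

Lemma accp_ok I eps l x K : forall m, exists m',
  run I eps (accp l x K) m = (fst (run I eps K m'), (4 * length l + snd (run I eps K m'))%nat) /\
  m' 11%nat = fold_left (fun a p => hI I x p + a) l (m 11%nat) /\
  (forall j, j <> 11%nat -> j <> 13%nat -> j <> 15%nat -> m' j = m j).
Proof. induction l as [|[t i] l IH]; intro m.
  - exists m. simpl. split; auto. now destruct (run I eps K m).
  - cbn [accp]. rewrite rLP, rLN, !rAr.
    set (m1 := upd (upd (upd (upd m 13 (prof I i)) 15 (INR (if x t i then 1%nat else 0%nat))) 13
               (aop_sem AMul (upd (upd m 13 (prof I i)) 15 (INR (if x t i then 1%nat else 0%nat)) 13)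
                   (upd (upd m 13 (prof I i)) 15 (INR (if x t i then 1%nat else 0%nat)) 15))) 11
               (aop_sem AAdd (upd (upd (upd m 13 (prof I i)) 15 (INR (if x t i then 1%nat else 0%nat))) 13
               (aop_sem AMul (upd (upd m 13 (prof I i)) 15 (INR (if x t i then 1%nat else 0%nat)) 13)
                   (upd (upd m 13 (prof I i)) 15 (INR (if x t i then 1%nat else 0%nat)) 15)) 13)
                 (upd (upd (upd m 13 (prof I i)) 15 (INR (if x t i then 1%nat else 0%nat))) 13
               (aop_sem AMul (upd (upd m 13 (prof I i)) 15 (INR (if x t i then 1%nat else 0%nat)) 13)
                   (upd (upd m 13 (prof I i)) 15 (INR (if x t i then 1%nat else 0%nat)) 15)) 11))).
    destruct (IH m1) as (m' & He & Hv & Hf). exists m'. rewrite He. split.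
    { cbn [fst snd length]. f_equal. lia. }
    split.
    + rewrite Hv. cbn [fold_left]. f_equal. unfold m1, upd. simpl Nat.eqb. cbv iota beta.
      unfold aop_sem, hI. cbn [fst snd]. destruct (x t i); simpl; ring.
    + intros j H1 H2 H3. rewrite Hf; auto. unfold m1. rewrite !upd_other; auto.
Qed.

Definition lsum (h : nat * nat -> R) (l : list (nat * nat)) : R := fold_right (fun p a => h p + a) 0 l.

Lemma fold_lsum h l a0 : fold_left (fun a p => h p + a) l a0 = a0 + lsum h l.
Proof. revert a0; induction l; intro a0; simpl. unfold lsum; simpl; ring.
  rewrite IHl. unfold lsum; simpl. ring. Qed.

Lemma lsum_app h l1 l2 : lsum h (l1 ++ l2) = lsum h l1 + lsum h l2.
Proof. induction l1; unfold lsum in *; simpl. ring. rewrite IHl1. ring. Qed.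

Definition pairs (n T : nat) : list (nat * nat) :=
  flat_map (fun t => map (fun i => (t, i)) (seq 0 n)) (seq 0 T).

Lemma lsum_row h t n s : lsum h (map (fun i => (t, i)) (seq s n)) =
  fold_right Rplus 0 (map (fun i => h (t, i)) (seq s n)).
Proof. revert s; induction n; intro s; simpl; auto. rewrite <- IHn. reflexivity. Qed.

Lemma lsum_pairs h n T s : lsum h (flat_map (fun t => map (fun i => (t, i)) (seq 0 n)) (seq s T)) =
  fold_right Rplus 0 (map (fun t => sumR n (fun i => h (t, i))) (seq s T)).
Proof. revert s; induction T; intro s; simpl; auto.
  rewrite lsum_app, lsum_row, IHT. reflexivity. Qed.

Lemma len_pairs n T s : length (flat_map (fun t => map (fun i => (t, i)) (seq 0 n)) (seq s T)) = (T * n)%nat.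
Proof. revert s; induction T; intro s; simpl; auto. rewrite length_app, length_map, length_seq, IHT. lia. Qed.

Lemma profit_pairs I x : lsum (hI I x) (pairs (n_items I) (n_times I)) = profit I x.
Proof. unfold pairs, profit. rewrite lsum_pairs. reflexivity. Qed.

Definition Kc (n T : nat) (x : solution) (keep upd_ : prog) : prog :=
  LoadNat 0 11 (accp (pairs n T) x (LoadNat 0 17 (Test 11 9 (fun b => if b then keep
     else Arith AAdd 9 11 17 upd_)))).

Definition shn (n k r : nat) : nat := (2 * (r * n + k) + 2)%nat.

Lemma shn_inj n k r r' : (1 <= n)%nat -> shn n k r = shn n k r' -> r = r'.
Proof. unfold shn. intros Hn H. assert (r * n = r' * n)%nat by lia.
  apply Nat.mul_cancel_r in H0; lia. Qed.

Lemma shn_diff n k k' r r' : (k < n)%nat -> (k' < n)%nat -> k <> k' -> shn n k r <> shn n k' r'.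
Proof. unfold shn. intros Hk Hk' Hne H. assert (E : (r * n + k = r' * n + k')%nat) by lia.
  destruct (Nat.lt_trichotomy r r') as [Hr|[Hr|Hr]].
  - assert (r * n + n <= r' * n)%nat by nia. lia.
  - subst. lia.
  - assert (r' * n + n <= r * n)%nat by nia. lia. Qed.

Fixpoint stage (A : algo) (n T a j : nat) (xb : solution) : prog :=
  match j with
  | O => Halt xb
  | S j' => sim (shn n a) a T (A n T)
      (fun x => Kc n T x (stage A n T (S a) j' xb) (stage A n T (S a) j' x))
  end.

Definition empty : solution := fun _ _ => false.

Section Stage.
Variables (A : algo) (I : instance) (eps F : R).
Hypothesis V : valid I.
Hypothesis Hn : (1 <= n_items I)%nat.
Hypothesis HT : (1 <= n_times I)%nat.
Definition cand k := fst (exec A (modI I k) eps).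
Hypothesis Hfe : forall k, (k < n_items I)%nat -> feasible I (cand k).
Hypothesis Hcf : forall k, (k < n_items I)%nat -> INR (snd (exec A (modI I k) eps)) <= F.

Lemma stage_ok : forall j a xb m, (a + j = n_items I)%nat -> feasible I xb -> m 9%nat <= profit I xb ->
  (forall k r, (a <= k < n_items I)%nat -> m (shn (n_items I) k r) = 0) ->
  let Rs := run I eps (stage A (n_items I) (n_times I) a j xb) m in
  feasible I (fst Rs) /\ m 9%nat <= profit I (fst Rs) /\
  (forall k, (a <= k < n_items I)%nat -> profit I (cand k) <= profit I (fst Rs)) /\
  INR (snd Rs) <= 14 * INR j * F + INR (n_items I * n_times I).
Proof.
  induction j as [|j IH]; intros a xb m Haj Fxb H9 Hz Rs; subst Rs.
  - cbn [stage]. rewrite rH. cbn [fst snd]. split; auto. split; auto. split.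
    + intros; lia.
    + rewrite Rmult_0_r, Rmult_0_l, Rplus_0_l. lra.
  - cbn [stage].
    set (n := n_items I) in *. set (T := n_times I) in *.
    destruct (sim_ok I eps a (shn n a) (A n T)
       (fun x => Kc n T x (stage A n T (S a) j xb) (stage A n T (S a) j x)))
      with (m := m) (mA := fun _ : nat => 0) as (m' & c' & Hf & He & Hcost).
    { intros r r'. apply shn_inj; auto. }
    { intro r. unfold shn. lia. }
    { intro r. apply Hz. lia. }
    change (n_times I) with T in He, Hcost. change (n_items I) with n in Hcost.
    change (run (modI I a) eps (A n T) (fun _ => 0)) with (exec A (modI I a) eps) in He, Hcost.
    fold (cand a) in He.
    rewrite He. clear He. unfold Kc. rewrite rLN.
    destruct (accp_ok I eps (pairs n T) (cand a)
      (LoadNat 0 17 (Test 11 9 (fun b => if b then stage A n T (S a) j xb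
             else Arith AAdd 9 11 17 (stage A n T (S a) j (cand a)))))
      (upd m' 11 (INR 0))) as (m2 & He2 & Hv2 & Hf2).
    rewrite He2. clear He2. rewrite rLN, rT.
    set (m3 := upd m2 17 (INR 0)).
    assert (E11 : m3 11%nat = profit I (cand a)).
    { unfold m3. rewrite upd_other by lia. rewrite Hv2, upd_same, fold_lsum.
      unfold n, T. rewrite profit_pairs. simpl. ring. }
    assert (E9 : m3 9%nat = m 9%nat).
    { unfold m3. rewrite upd_other by lia. rewrite Hf2 by lia. rewrite upd_other by lia.
      apply Hf; try lia. intro r. unfold shn. lia. }
    assert (Ez : forall k r, (S a <= k < n)%nat -> m3 (shn n k r) = 0).
    { intros k r Hk. unfold m3. rewrite upd_other by (unfold shn; lia).
      rewrite Hf2 by (unfold shn; lia). rewrite upd_other by (unfold shn; lia).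
      rewrite Hf. apply Hz. lia.
      - intros r'. apply shn_diff; lia.
      - unfold shn; lia. - unfold shn; lia. - unfold shn; lia. - unfold shn; lia. }
    assert (Hca := run_ge (modI I a) eps (A n T) (fun _ => 0)).
    change (n * T <= snd (exec A (modI I a) eps))%nat in Hca.
    assert (Hca2 : (1 <= n * T)%nat) by nia.
    assert (Hcn : (c' + 4 * length (pairs n T) + 4 <= 14 * snd (exec A (modI I a) eps))%nat).
    { unfold pairs. rewrite len_pairs. nia. }
    assert (HF : INR (snd (exec A (modI I a) eps)) <= F) by (apply Hcf; lia).
    rewrite E11, E9.
    destruct (Rle_dec (profit I (cand a)) (m 9%nat)) as [Hle|Hlt].
    + destruct (IH (S a) xb m3) as (F1 & F2 & F3 & F4); auto; try lia. rewrite E9; auto.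
      cbn [fst snd]. rewrite E9 in F2. split; auto. split; auto. split.
      * intros k Hk. destruct (Nat.eq_dec k a). subst. lra. apply F3. lia.
      * set (s := snd (run I eps (stage A n T (S a) j xb) m3)) in *.
        set (c := snd (exec A (modI I a) eps)) in *.
        assert (INR (c' + S (4 * length (pairs n T) + S (S s))) <= INR (14 * c) + INR s)
          by (rewrite <- plus_INR; apply le_INR; lia).
        rewrite mult_INR in H. rewrite S_INR. replace (INR 14) with 14 in H by (simpl; ring).
        pose proof (pos_INR j). nra.
    + rewrite rAr.
      set (m4 := upd m3 9 (aop_sem AAdd (m3 11%nat) (m3 17%nat))).
      assert (E94 : m4 9%nat = profit I (cand a)).
      { unfold m4. rewrite upd_same. unfold aop_sem. rewrite E11. unfold m3. rewrite upd_same. simpl. ring. }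
      destruct (IH (S a) (cand a) m4) as (F1 & F2 & F3 & F4); auto; try lia.
      { apply Hfe. lia. }
      { rewrite E94. lra. }
      { intros k r Hk. unfold m4. rewrite upd_other by (unfold shn; lia). apply Ez; auto. }
      cbn [fst snd]. rewrite E94 in F2. split; auto. split; [lra|]. split.
      * intros k Hk. destruct (Nat.eq_dec k a). subst. lra. apply F3. lia.
      * set (s := snd (run I eps (stage A n T (S a) j (cand a)) m4)) in *.
        set (c := snd (exec A (modI I a) eps)) in *.
        assert (INR (c' + S (4 * length (pairs n T) + S (S (S s)))) <= INR (14 * c) + INR s)
          by (rewrite <- plus_INR; apply le_INR; lia).
        rewrite mult_INR in H. rewrite S_INR. replace (INR 14) with 14 in H by (simpl; ring).
        pose proof (pos_INR j). nra.
Qed.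
End Stage.

Definition Aprime (A : algo) : algo := fun n T =>
  match n with
  | O => Halt empty
  | S _ => match T with
           | O => Halt empty
           | S _ => LoadNat 1 9 (LoadNat 0 17 (Arith ASub 9 17 9 (stage A n T 0 n empty)))
           end
  end.

Lemma Aprime_eq A n T : (1 <= n)%nat -> (1 <= T)%nat ->
  Aprime A n T = LoadNat 1 9 (LoadNat 0 17 (Arith ASub 9 17 9 (stage A n T 0 n empty))).
Proof. intros. destruct n; [lia|]. destruct T; [lia|]. reflexivity. Qed.

Lemma feas_empty I : valid I -> feasible I empty.
Proof. intros (_&_&Hc&_). split.
  - intros t Ht. rewrite sumR_zero. apply Rlt_le, Hc; auto. intros; simpl; ring.
  - intros t i _ _ H. discriminate. Qed.

Lemma profit_nonneg I x : valid I -> 0 <= profit I x.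
Proof. intros (Hp&_). apply sumR_nonneg; intros t Ht. apply sumR_nonneg; intros i Hi.
  pose proof (Hp i Hi). pose proof (b2R_01 (x t i)). nra. Qed.

Theorem mainTheorem2 (f : nat -> nat -> R -> R)
  (f_nonneg : forall n T e, 0 < e -> 0 <= f n T e)
  (A : algo)
  (HA : forall (I : instance) (eps : R), valid I -> 0 < eps ->
     feasible I (fst (exec A I eps)) /\
     (forall y, feasible I y -> one_in I y ->
        (1 - eps) * profit I y <= profit I (fst (exec A I eps))) /\
     INR (snd (exec A I eps)) <= f (n_items I) (n_times I) eps) :
  exists (c : R) (A' : algo), 0 < c /\
    forall (I : instance) (eps : R), valid I -> 0 < eps ->
     feasible I (fst (exec A' I eps)) /\
     (forall y, feasible I y ->
        (1 - eps) * profit I y <= profit I (fst (exec A' I eps))) /\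
     INR (snd (exec A' I eps)) <= c * INR (n_items I) * f (n_items I) (n_times I) eps.
Proof.
  exists 18, (Aprime A). split; [lra|]. intros I eps V Heps.
  pose proof (f_nonneg (n_items I) (n_times I) eps Heps) as Hf0.
  pose proof (pos_INR (n_items I)) as Hn0.
  destruct (Nat.eq_dec (n_items I) 0) as [E|Hn];
  [|destruct (Nat.eq_dec (n_times I) 0) as [E|HT]].
  - unfold exec. rewrite E. cbn [Aprime]. rewrite rH. cbn [fst snd]. rewrite E.
    split; [apply feas_empty; auto|]. split.
    + intros y _. unfold profit. rewrite (sumR_zero _ (fun t => sumR _ _)).
      * rewrite Rmult_0_r. apply profit_nonneg; auto.
      * intros t _. rewrite E. reflexivity.
    + simpl. nra.
  - unfold exec. rewrite E. destruct (n_items I) as [|n0] eqn:En; [lia|]. cbn [Aprime].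
    rewrite rH. cbn [fst snd]. rewrite E.
    split; [apply feas_empty; auto|]. split.
    + intros y _. assert (profit I y = 0) by (unfold profit; rewrite E; reflexivity).
      rewrite H, Rmult_0_r. apply profit_nonneg; auto.
    + rewrite Nat.mul_0_r, INR_0. apply Rmult_le_pos; [|auto]. apply Rmult_le_pos; lra.
  - assert (Hn1 : (1 <= n_items I)%nat) by lia. assert (HT1 : (1 <= n_times I)%nat) by lia.
    set (F := f (n_items I) (n_times I) eps).
    assert (Hfe : forall k, (k < n_items I)%nat -> feasible I (cand A I eps k)).
    { intros k Hk. apply (feas_modI I k); [auto|lia|]. exact (proj1 (HA _ _ (valid_modI I k V ltac:(lia) Hk) Heps)). }
    assert (Hcf : forall k, (k < n_items I)%nat -> INR (snd (exec A (modI I k) eps)) <= F).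
    { intros k Hk. exact (proj2 (proj2 (HA _ _ (valid_modI I k V ltac:(lia) Hk) Heps))). }
    unfold exec at 1 2 3. rewrite Aprime_eq by auto. rewrite !rLN, rAr.
    set (m0 := upd (upd (upd (fun _ : nat => 0) 9 (INR 1)) 17 (INR 0)) 9
        (aop_sem ASub (upd (upd (fun _ : nat => 0) 9 (INR 1)) 17 (INR 0) 17%nat)
           (upd (upd (fun _ : nat => 0) 9 (INR 1)) 17 (INR 0) 9%nat))).
    assert (E9 : m0 9%nat = -1). { unfold m0. rewrite upd_same. unfold upd; simpl. ring. }
    destruct (stage_ok A I eps F Hn1 HT1 Hfe Hcf (n_items I) 0 empty m0) as (F1 & F2 & F3 & F4).
    + lia.
    + apply feas_empty; auto.
    + rewrite E9. pose proof (profit_nonneg I empty V). lra.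
    + intros k r _. unfold m0. rewrite !upd_other by (unfold shn; lia). reflexivity.
    + cbn [fst snd]. split; auto. split.
      * intros y Fy.
        destruct (classic (exists i, (i < n_items I)%nat /\ y (pred (n_times I)) i = true)) as [Hex|Hno].
        -- destruct (max_exists _ _ (prof I) Hex) as (k & Hk & Hyk & Hmax).
           destruct (opt_modI I k y V ltac:(lia) Hk Fy Hyk Hmax) as (G1 & G2 & G3).
           rewrite <- G3.
           eapply Rle_trans. apply (proj1 (proj2 (HA _ _ (valid_modI I k V ltac:(lia) Hk) Heps))); auto.
           eapply Rle_trans. apply profit_modI_le; auto. apply F3. lia.
        -- assert (profit I y = 0).
           { apply sumR_zero; intros t Ht. apply sumR_zero; intros i Hi.
             destruct (y t i) eqn:Ey. exfalso. apply Hno. exists i. split; auto. eapply use_mono; eauto.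
             simpl; ring. }
           rewrite H, Rmult_0_r. apply profit_nonneg; auto.
      * set (s := snd (run I eps (stage A (n_items I) (n_times I) 0 (n_items I) empty) m0)) in *.
        assert (Hc0 := Hcf 0%nat ltac:(lia)).
        assert (Hca := run_ge (modI I 0) eps (A (n_items I) (n_times I)) (fun _ => 0)).
        change (n_items I * n_times I <= snd (exec A (modI I 0) eps))%nat in Hca.
        apply le_INR in Hca. assert (Hnt : (1 <= n_items I * n_times I)%nat) by nia.
        apply le_INR in Hnt. apply le_INR in Hn1. simpl in Hn1.
        rewrite !S_INR. fold F. simpl INR in Hnt.
        assert (0 <= (INR (n_items I) - 1) * F) by (apply Rmult_le_pos; lra). lra.
Qed.
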